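(* Assume (A1)–(A3) and $\mu_u,\mu_v>0$, and write $u^*=w^*(\mu_u,p)$, $v^*=w^*(\mu_v,q)$. Then $$\lambda_1(\mu_u,p-cv^* )\sum_{i=1}^n\alpha_i(u_i^* )^2+c^3\lambda_1(\mu_v,q-bu^* )\sum_{i=1}^n\alpha_i(v_i^* )^2\le-\sum_{i=1}^n\alpha_i(cv_i^*-u_i^* )^2(cv_i^*+u_i^* )\le 0,$$ and if equality holds throughout then $u^*=cv^*$ and $bc=1$. In particular, $\lambda_1(\mu_v,q-bu^* )$ and $\lambda_1(\mu_u,p-cv^* )$ cannot both be $\ge 0$ unless both equal $0$, $bc=1$ and $u^*=cv^*$.
   Context: Let $n\ge2$ and $A=(a_{ij})_{n\times n}$ with $a_{ij}\ge0$ for $i\ne j$. The connection matrix $L$ has $L_{ij}=a_{ij}$ for $i\ne j$, $L_{ii}=-\sum_{k\ne i}a_{ki}$. The weighted digraph $\mathcal G$ associated with $A$ has vertices $\{1,\dots,n\}$ and, for $i\ne j$, an arc $(i,j)$ iff $a_{ji}>0$, with weight $a_{ji}$. A cycle is a list of distinct vertices $i_1,\dots,i_k$, $k\ge2$, with arcs $(i_m,i_{m+1})$, $m<k$, and $(i_k,i_1)$; its weight is the product of its arc weights; its reverse has all arcs reversed. $\mathcal G$ is cycle-balanced if for every cycle its reverse is also a cycle of $\mathcal G$ with the same weight. Assumptions: (A1) $b,c>0$, $bc\le1$, $p_i,q_i>0$; (A2) $L$ irreducible; (A3) $\mathcal G$ cycle-balanced. $\mathcal L$ is the matrix with $\mathcal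 L_{ij}=-a_{ij}$ ($i\ne j$), $\mathcal L_{ii}=\sum_{k\ne i}a_{ik}$, and $\alpha_i>0$ is the cofactor of its $i$-th diagonal entry. For $\mu>0$, $r\gg0$, $w^*(\mu,r)\gg0$ is the unique positive equilibrium of $w_i'=\mu\sum_jL_{ij}w_j+w_i(r_i-w_i)$. For $h\in\mathbb R^n$, $\lambda_1(\mu,h)=-s(\mu L+\mathrm{diag}(h_i))$, $s$ denoting the spectral bound (maximal real part of eigenvalues). *)

(* Defs.v *)
From mathcomp Require Import all_boot all_algebra.
From mathcomp Require Import all_classical all_reals.
From mathcomp.real_closed Require Import complex.
Set Implicit Arguments. Unset Strict Implicit. Unset Printing Implicit Defensive.
Import GRing.Theory Num.Theory.
Local Open Scope ring_scope.

Section Defs.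
Variables (R : realType) (n : nat).
Implicit Types (A M : 'M[R]_n) (s : seq 'I_n).

Definition connL A : 'M[R]_n :=
  \matrix_(i, j) (if i == j then - \sum_(k | k != i) A k i else A i j).

Definition calL A : 'M[R]_n :=
  \matrix_(i, j) (if i == j then \sum_(k | k != i) A i k else - A i j).

Definition alpha A (i : 'I_n) : R := cofactor (calL A) i i.

(* irreducible square matrix: there is no nonempty proper index set S
   with M_ij = 0 for all i in S, j not in S (i.e. M is not permutation-similar
   to a block triangular matrix) *)
Definition irreducible_mx M : Prop :=
  ~ exists S : {set 'I_n},
      [/\ S != finset.set0, S != [set: 'I_n] & forall i j, i \in S -> j \notin S -> M i j = 0].

(* arcs of the closed walk i_1,...,i_k,i_1 : pairs (i_m, i_{m+1}) and (i_k, i_1) *)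
Definition cycle_arcs s : seq ('I_n * 'I_n) := zip s (rot 1 s).

(* digraph G: arc (i,j) iff a_ji > 0, with weight a_ji *)
Definition is_graph_cycle A s : Prop :=
  [/\ uniq s, (2 <= size s)%N & all (fun p : 'I_n * 'I_n => 0 < A p.2 p.1) (cycle_arcs s)].

Definition cycle_weight A s : R :=
  \prod_(p <- cycle_arcs s) A p.2 p.1.

Definition cycle_balanced A : Prop :=
  forall s, is_graph_cycle A s ->
    is_graph_cycle A (rev s) /\ cycle_weight A (rev s) = cycle_weight A s.

Definition spectral_bound M : R :=
  sup [set complex.Re z | z in
        [set z : R[i] | eigenvalue (map_mx (real_complex R) M) z]]%classic.

Definition lambda1 A (mu : R) (h : 'I_n -> R) : R :=
  - spectral_bound (mu *: connL A + diag_mx (\row_i h i)).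

(* w is a positive equilibrium of w_i' = mu sum_j L_ij w_j + w_i (r_i - w_i) *)
Definition positive_equilibrium A (mu : R) (r w : 'I_n -> R) : Prop :=
  (forall i, 0 < w i) /\
  (forall i, mu * (\sum_j connL A i j * w j) + w i * (r i - w i) = 0).

End Defs.

(* Main.v *)
Require Import Defs.
From mathcomp Require Import all_boot all_algebra.
From mathcomp Require Import all_classical all_reals.
From mathcomp.real_closed Require Import complex polyrcf.
From mathcomp Require Import spectral sesquilinear mxpoly ring lra.
Import order.Order.TTheory GRing.Theory Num.Theory.
Local Open Scope ring_scope.
Set Implicit Arguments. Unset Strict Implicit. Unset Printing Implicit Defensive.
Lemma rot1_zip (S T : Type) (u : seq S) (v : seq T) :
  size u = size v -> rot 1 (zip u v) = zip (rot 1 u) (rot 1 v).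
Proof.
case: u v => [|x u] [|y v] //= [Hs].
by rewrite !rot1_cons zip_rcons.
Qed.

Lemma perm_rev_arcs (T : eqType) (s : seq T) :
  perm_eq (zip (rev s) (rot 1 (rev s)))
          (map (fun p => (p.2, p.1)) (zip s (rot 1 s))).
Proof.
have sw : forall (t1 t2 : seq T), zip t2 t1 = map (fun p => (p.2, p.1)) (zip t1 t2).
  by elim=> [|x t1 IH] [|y t2] //=; rewrite IH.
rewrite -rev_rotr -rev_zip ?size_rotr // perm_rev (sw (rotr 1 s) s).
apply: perm_map.
have -> : zip s (rot 1 s) = rot 1 (zip (rotr 1 s) s).
  by rewrite rot1_zip ?size_rotr // rotrK.
by rewrite perm_sym perm_rot.
Qed.

Lemma path_zip (T : Type) (e : rel T) x s y :
  path e x (rcons s y) -> all (fun p => e p.1 p.2) (zip (x :: s) (rcons s y)).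
Proof.
elim: s x => [|a s IH] x /=; first by rewrite andbT.
by case/andP=> -> /IH ->.
Qed.

Lemma cycle_zip (T : Type) (e : rel T) s :
  cycle e s -> all (fun p => e p.1 p.2) (zip s (rot 1 s)).
Proof.
case: s => [|x s] //= H.
by rewrite rot1_cons; have := path_zip H.
Qed.
Section Flow.
Variables (R : realFieldType) (T : finType) (f : T -> T -> R).
Hypothesis fanti : forall x y, f x y = - f y x.
Hypothesis fdiv : forall x, \sum_y f x y = 0.

Let V v := [exists k, 0 < f v k].
Let g v := odflt v [pick k | 0 < f v k].

Let gP v : V v -> 0 < f v (g v).
Proof.
rewrite /V /g; case: pickP => [k Hk|H] //= /existsP [k Hk].
by rewrite H in Hk.
Qed.

Let Vg v : V v -> V (g v).
Proof.
move=> /gP Hv; rewrite /V; case: (boolP [exists k, 0 < f (g v) k]) => // /existsPn H.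
have Hneg : f (g v) v < 0 by rewrite fanti oppr_lt0.
have : \sum_y f (g v) y < 0.
  rewrite (bigD1 v) //=; apply: (@le_lt_trans _ _ (f (g v) v + 0)); last by rewrite addr0.
  rewrite lerD2l; apply: sumr_le0 => y _.
  by rewrite leNgt H.
by rewrite fdiv ltxx.
Qed.

Let Viter k v : V v -> V (iter k g v).
Proof. by elim: k => [|k IH] //= /IH /Vg. Qed.

Lemma flow_cycle x y : 0 < f x y ->
  exists c : seq T, [/\ uniq c, (2 <= size c)%N &
     all (fun p => 0 < f p.1 p.2) (zip c (rot 1 c))].
Proof.
move=> Hxy; have Vx : V x by apply/existsP; exists y.
have := looping_order g x; rewrite /looping => /trajectP [i Hi Heq].
set z := iter i g x.
have Vz : V z by apply: Viter.
have zc : fcycle g (orbit g z).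
  apply/(orbitPcycle 0 3); exists (order g x - i).-1.
  rewrite prednK ?subn_gt0 // /z -iterD subnK ?(ltnW Hi) //.
exists (orbit g z); split; first exact: orbit_uniq.
  have z1 := in_orbit g z.
  have z2 : g z \in orbit g z by apply: mem_orbit.
  have gzz : g z != z.
    by apply/eqP => E; have := gP Vz; rewrite E; have := fanti z z; lra.
  move: z1 z2 gzz; case: (orbit g z) => [|a [|b r]] //.
  by rewrite !inE => /eqP -> /eqP ->; rewrite eqxx.
have := cycle_zip zc => /allP Hall; apply/allP => p Hp.
have /eqP <- := Hall p Hp.
apply: gP.
have : p.1 \in orbit g z.
  have := map_f (fun q : T * T => q.1) Hp.
  by rewrite -/(unzip1 _) unzip1_zip ?size_rot.
rewrite -fconnect_orbit => /iter_findex <-; exact: Viter.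
Qed.

End Flow.
Lemma prod_seq_lt (R : realDomainType) (T : eqType) (r : seq T) (E1 E2 : T -> R) :
  r != [::] -> (forall x, x \in r -> 0 <= E1 x < E2 x) ->
  \prod_(x <- r) E1 x < \prod_(x <- r) E2 x.
Proof.
move=> rn H; rewrite big_seq [X in _ < X]big_seq; apply: ltr_prod => //.
by case: r rn {H} => // a r _; apply/hasP; exists a; rewrite ?mem_head.
Qed.

Section Balance.
Variables (R : realType) (n : nat) (A : 'M[R]_n).
Hypothesis Apos : forall i j, i != j -> 0 <= A i j.
Hypothesis cb : cycle_balanced A.
Variable al : 'I_n -> R.
Hypothesis alpos : forall i, 0 < al i.
Hypothesis aldiv : forall j, \sum_k (al j * A j k - al k * A k j) = 0.

Lemma detailed_balance i j : al i * A i j = al j * A j i.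
Proof.
pose f x y := al x * A x y - al y * A y x.
have fanti : forall x y, f x y = - f y x by move=> x y; rewrite /f opprB.
suff H : forall x y, ~ 0 < f x y.
  apply/eqP; rewrite -subr_eq0; apply/eqP.
  have := H i j; have := H j i; rewrite -/(f i j) (fanti j i); lra.
move=> x y Hxy.
have [c [uc sc Hc]] := flow_cycle fanti aldiv Hxy.
have Hc' : forall p, p \in zip c (rot 1 c) ->
    0 <= al p.2 * A p.2 p.1 < al p.1 * A p.1 p.2.
  move=> p /(allP Hc) /= Hp; rewrite -subr_gt0 Hp andbT.
  have Hne : p.2 != p.1.
    by apply/eqP => E; move: Hp; rewrite /f E subrr ltxx.
  by apply: mulr_ge0; [apply: ltW | apply: Apos].
have posA : forall p, p \in zip c (rot 1 c) -> 0 < A p.1 p.2.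
  move=> p /Hc' /andP [H1 H2].
  have := le_lt_trans H1 H2; rewrite pmulr_rgt0 //.
have Hrev : is_graph_cycle A (rev c).
  split; rewrite ?rev_uniq ?size_rev //.
  rewrite /cycle_arcs (perm_all _ (perm_rev_arcs c)) all_map.
  by apply/allP => p /posA.
have [_ Hw] := cb Hrev; move: Hw; rewrite revK.
rewrite /cycle_weight (perm_big _ (perm_rev_arcs c)) big_map /=.
have Hnil : zip c (rot 1 c) != [::].
  by rewrite -size_eq0 size_zip size_rot minnn; case: (size c) sc.
have := prod_seq_lt Hnil Hc'.
rewrite !big_split /=.
have -> : \prod_(i <- zip c (rot 1 c)) al i.2 = \prod_(i <- zip c (rot 1 c)) al i.1.
  rewrite -(big_map (fun p => p.2) xpredT al) -(big_map (fun p => p.1) xpredT al).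
  rewrite -/(unzip1 _) -/(unzip2 _) unzip1_zip ?size_rot // unzip2_zip ?size_rot //.
  by apply: perm_big; rewrite perm_rot.
move=> Hlt Heq; move: Hlt; rewrite Heq ltxx //.
Qed.

End Balance.
Section Irr.
Variables (R : realType) (n : nat) (A : 'M[R]_n).
Hypothesis Apos : forall i j, i != j -> 0 <= A i j.
Hypothesis Airr : irreducible_mx (connL A).

Lemma irrS (S : {set 'I_n}) :
  (forall i j, i \in S -> j \notin S -> A i j = 0) -> S = finset.set0 \/ S = [set: 'I_n].
Proof.
move=> HS; case: (eqVneq S finset.set0) => [->|S0]; first by left.
case: (eqVneq S [set: 'I_n]) => [->|ST]; first by right.
exfalso; apply: Airr; exists S; split => // i j iS jS.
rewrite mxE; case: eqP => [E|_]; last exact: HS.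
by move: jS; rewrite -E iS.
Qed.

Lemma maxprinc (i0 : 'I_n) (w : 'I_n -> R) :
  (forall l, (forall k, w k <= w l) -> \sum_(k | k != l) A l k * (w l - w k) <= 0) ->
  forall k, w k = w i0.
Proof.
move=> H.
pose S := [set l | [forall k, w k <= w l]].
have HS : forall l k, l \in S -> k \notin S -> A l k = 0.
  move=> l k; rewrite !inE => /forallP lS /forallPn [m]; rewrite -ltNge => km.
  have lk : w k < w l by apply: lt_le_trans km (lS m).
  have kl : k != l by apply/eqP => E; move: lk; rewrite E ltxx.
  have Hs := H l lS.
  have Hz : \sum_(k | k != l) A l k * (w l - w k) = 0.
    apply/eqP; rewrite eq_le Hs /=; apply: sumr_ge0 => m0 m0l.
    by apply: mulr_ge0; [apply: Apos; rewrite eq_sym | rewrite subr_ge0 lS].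
  move/eqP: Hz; rewrite psumr_eq0 => [/allP Hall|m0 m0l].
    have := Hall k (mem_index_enum k); rewrite kl /= mulf_eq0 => /orP [/eqP //|].
    by rewrite subr_eq0 => /eqP E; move: lk; rewrite E ltxx.
  by apply: mulr_ge0; [apply: Apos; rewrite eq_sym | rewrite subr_ge0 lS].
have [l _ Hl] := @arg_maxP _ R _ i0 xpredT w isT.
have lS : l \in S by rewrite inE; apply/forallP => k; apply: Hl.
case: (irrS HS) => [S0|ST]; first by move: lS; rewrite S0 inE.
have all : forall k, k \in S by move=> k; rewrite ST inE.
move=> k; apply/eqP; rewrite eq_le.
by move: (all k) (all i0); rewrite !inE => /forallP -> /forallP ->.
Qed.

End Irr.
Lemma char_poly_horner (F : comNzRingType) m (B : 'M[F]_m) t :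
  (char_poly B).[t] = \det (t%:M - B).
Proof.
rewrite /char_poly -horner_evalE -det_map_mx; congr (\det _).
by apply/matrixP => i j; rewrite !mxE /= rmorphB rmorphMn /= !horner_evalE hornerX hornerC.
Qed.

Section Alpha.
Variables (R : realType) (n : nat) (A : 'M[R]_n).
Hypothesis Apos : forall i j, i != j -> 0 <= A i j.
Hypothesis Airr : irreducible_mx (connL A).

Lemma calL_mul (x : 'I_n -> R) l :
  \sum_k calL A l k * x k = \sum_(k | k != l) A l k * (x l - x k).
Proof.
rewrite (bigD1 l) //= mxE eqxx big_distrl /= -big_split /=.
by apply: eq_bigr => k kl; rewrite mxE eq_sym (negbTE kl) mulrBr mulNr.
Qed.

Lemma det_calL (i0 : 'I_n) : \det (calL A) = 0.
Proof.
  rewrite -det_tr; apply/eqP/det0P; exists (const_mx 1).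
    apply/eqP => /rowP /(_ i0); rewrite !mxE; apply/eqP; exact: oner_neq0.
  apply/rowP => l; rewrite !mxE.
  have E : \sum_k calL A l k * 1 = 0.
    by rewrite (calL_mul (fun _ => 1)) big1 // => m _; rewrite subrr mulr0.
  by apply: (etrans _ E); apply: eq_bigr => m _; rewrite !mxE mulr1 mul1r.
Qed.

Lemma adj_col (j k : 'I_n) : \adj (calL A) k j = alpha A j.
Proof.
have Hd := det_calL j.
have H := mul_mx_adj (calL A); rewrite Hd in H.
pose x m := \adj (calL A) m j.
transitivity (x j); last by rewrite /x mxE /alpha.
apply: (@maxprinc R n A Apos Airr j x) => l _.
rewrite -(calL_mul x); move/matrixP/(_ l j): H; rewrite !mxE mul0rn => E.
by rewrite /x E.
Qed.

Lemma alpha_div j : \sum_k (alpha A j * A j k - alpha A k * A k j) = 0.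
Proof.
have H := mul_adj_mx (calL A); rewrite (det_calL j) in H.
move/matrixP/(_ j j): H; rewrite !mxE mul0rn => E.
rewrite (bigD1 j) //= subrr add0r sumrB -mulr_sumr.
apply: (etrans _ E); rewrite [RHS](bigD1 j) //= adj_col mxE eqxx; congr (_ + _).
rewrite -sumrN; apply: eq_bigr => k kj.
by rewrite adj_col mxE (negbTE kj) mulrN.
Qed.


Lemma minor_nonsing (i : 'I_n) (x : R) : 0 <= x ->
  \det (x%:M + row' i (col' i (calL A))) != 0.
Proof.
move=> x0; set N := row' i (col' i (calL A)).
apply/negP => /eqP Hd.
have : \det ((x%:M + N)^T) == 0 by rewrite det_tr Hd.
case/det0P => v v0 Hv.
pose w m := if unlift i m is Some k then v 0 k else 0.
have wi : w i = 0 by rewrite /w unlift_none.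
have wl : forall k, w (lift i k) = v 0 k by move=> k; rewrite /w liftK.
have Hrow : forall l, x * w (lift i l) + \sum_m calL A (lift i l) m * w m = 0.
  move=> l; move/rowP/(_ l): Hv; rewrite !mxE => Hl.
  rewrite (bigD1_ord i) //= wi mulr0 add0r; apply: (etrans _ Hl).
  rewrite [RHS](bigD1 l) //= !mxE eqxx /= mulr1n mulrDr -addrA; congr (_ + _).
    by rewrite wl mulrC.
  rewrite [LHS](bigD1 l) //= wl mulrC !mxE; congr (_ + _).
  by apply: eq_bigr => k kl; rewrite wl mulrC !mxE (eq_sym l k) (negbTE kl) mulr0n add0r.
have Hmax := @maxprinc R n A Apos Airr i (fun m => `|w m|).
have Hz : forall k, `|w k| = 0.
  move=> k; rewrite (Hmax _ k) /=; first by rewrite wi normr0.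
  move=> l _ /=; case: (unliftP i l) => [l' ->|->].
    have := Hrow l'; rewrite calL_mul.
    set a := \sum_(k | k != lift i l') A (lift i l') k.
    have Ha : \sum_(k | k != lift i l') A (lift i l') k * (w (lift i l') - w k)
        = a * w (lift i l') - \sum_(k | k != lift i l') A (lift i l') k * w k.
      by rewrite /a mulr_suml -sumrB; apply: eq_bigr => m _; rewrite mulrBr.
    have Hb : \sum_(k | k != lift i l') A (lift i l') k * (`|w (lift i l')| - `|w k|)
        = a * `|w (lift i l')| - \sum_(k | k != lift i l') A (lift i l') k * `|w k|.
      by rewrite /a mulr_suml -sumrB; apply: eq_bigr => m _; rewrite mulrBr.
    rewrite Ha Hb => E.
    have E2 : (x + a) * w (lift i l') = \sum_(k | k != lift i l') A (lift i l') k * w k.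
      by rewrite mulrDl; move/eqP: E; rewrite addrA subr_eq0 => /eqP.
    have a0 : 0 <= a by apply: sumr_ge0 => m ml; apply: Apos; rewrite eq_sym.
    have E3 : (x + a) * `|w (lift i l')| <= \sum_(k | k != lift i l') A (lift i l') k * `|w k|.
      have -> : (x + a) * `|w (lift i l')| = `|(x + a) * w (lift i l')|.
        by rewrite normrM (ger0_norm (addr_ge0 x0 a0)).
      rewrite E2; apply: le_trans (ler_norm_sum _ _ _) _.
      apply: ler_sum => m ml; rewrite normrM ger0_norm //; apply: Apos; rewrite eq_sym //.
    have : 0 <= x * `|w (lift i l')| by apply: mulr_ge0.
    move: E3; set s := \sum_(k | _) _; lra.
  apply: sumr_le0 => m mi; rewrite wi normr0 sub0r mulrN oppr_le0.
  by apply: mulr_ge0; [apply: Apos; rewrite eq_sym|].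
apply: (negP v0); apply/eqP/rowP => k; rewrite mxE.
by apply/normr0_eq0; rewrite -wl Hz.
Qed.


Lemma alpha_pos i : 0 < alpha A i.
Proof.
have -> : alpha A i = \det (row' i (col' i (calL A))).
  by rewrite /alpha /cofactor addnn -signr_odd odd_double expr0 mul1r.
set N := row' i (col' i (calL A)).
pose q := char_poly (- N).
have Hq : forall t, q.[t] = \det (t%:M + N).
  by move=> t; rewrite /q char_poly_horner opprK.
have lq : lead_coef q = 1 by apply/monicP; apply: char_poly_monic.
have lqp : 0 < lead_coef q by rewrite lq ltr01.
have [T0 HT0] := @poly_pinfty_gt_lc R q lqp.
set T := Num.max T0 0.
have qT : 1 <= q.[T] by rewrite -lq; apply: HT0; rewrite le_max lexx.
rewrite ltNge; apply/negP => Hle.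
have q0 : q.[0] <= 0 by rewrite Hq raddf0 add0r.
have T0p : 0 <= T by rewrite le_max lexx orbT.
have qq : q.[0] <= 0 <= q.[T] by rewrite q0 /=; apply: le_trans qT; apply: ler01.
have [x /andP [x0 xT]] := @poly_ivt R q 0 T T0p qq.
rewrite /root Hq => /eqP Hd.
by have := minor_nonsing i x0; rewrite -/N Hd eqxx.
Qed.

End Alpha.
Section SB.
Variables (R : realType) (n : nat).

Lemma sb_ub (M : 'M[R]_n) (z : R[i]) :
  eigenvalue (map_mx (real_complex R) M) z -> complex.Re z <= spectral_bound M.
Proof.
move=> Hz; rewrite /spectral_bound.
apply: sup_upper_bound; last by exists z.
split; first by exists (complex.Re z); exists z.
have [rs Hrs] := closed_field_poly_normal (char_poly (map_mx (real_complex R) M)).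
exists (\sum_(w <- rs) `|complex.Re w|) => r [w Hw <-].
have : w \in rs.
  move: Hw; rewrite /= eigenvalue_root_char Hrs rootZ; last first.
    by rewrite lead_coef_eq0 -size_poly_eq0 size_char_poly.
  by rewrite root_prod_XsubC.
move=> win; rewrite (big_rem _ win) /=.
apply: le_trans (ler_norm _) _; rewrite lerDl; apply: sumr_ge0 => ? _; apply: normr_ge0.
Qed.
End SB.
Section Quad.
Variables (R : realType) (n : nat).
Local Notation toC := (real_complex R).
Local Open Scope sesquilinear_scope.

Lemma quad_bound (S : 'M[R]_n) (s : R) (xr : 'rV[R]_n) :
  (forall i j, S i j = S j i) ->
  (forall z, eigenvalue (map_mx toC S) z -> complex.Re z <= s) ->
  (xr *m S *m xr^T) 0 0 <= s * (xr *m xr^T) 0 0.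
Proof.
move=> Ssym Heig.
set Sc := map_mx toC S.
have realC : forall r : R, toC r \is Num.real.
  by move=> r; apply/complex_realP; exists r.
have Hsym : Sc ^t* = Sc.
  by apply/matrixP => i j; rewrite !mxE conj_Creal ?realC // Ssym.
have Hnorm : Sc \is normalmx by apply/normalmxP; rewrite Hsym.
have Hherm : Sc \is hermsymmx.
  by apply/is_hermitianmxP; rewrite expr0 scale1r Hsym.
have Hdec := orthomx_spectralP Hnorm.
set P := spectralmx Sc in Hdec; set X := spectral_diag Sc in Hdec.
have Pu : P \is unitarymx by apply: spectral_unitarymx.
have Xreal := hermitian_spectral_diag_real Hherm; rewrite -/X in Xreal.
set xc := map_mx toC xr.
have Hxc : xc ^t* = map_mx toC xr^T.
  by apply/matrixP => i j; rewrite !mxE conj_Creal ?realC.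
set y := xc *m P^t*.
have Hy : y ^t* = P *m xc ^t*.
  by rewrite /y trmx_mul map_mxM trmxCK.
have HQ : xc *m Sc *m xc ^t* = y *m diag_mx X *m y ^t*.
  by rewrite Hy {1}Hdec invmx_unitary // /y !mulmxA.
have HN : xc *m xc ^t* = y *m y ^t*.
  by rewrite Hy /y mulmxA mulmxKtV.
have Heigk : forall k, eigenvalue Sc (X 0 k).
  move=> k; apply/eigenvalueP; exists (row k P).
    rewrite {1}Hdec !mulmxA -row_mul mulmxV ?unitarymx_unit //.
    have -> : row k 1%:M *m diag_mx X = X 0 k *: row k (1%:M : 'M[R[i]]_n).
      apply/rowP => j; rewrite mul_mx_diag !mxE.
      by case: eqP => [->|_]; rewrite ?mulr1n ?mulr0n ?mul0r ?mulr0 ?mul1r ?mulr1.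
    by rewrite -scalemxAl -row_mul mul1mx.
  apply/negP => /eqP H0.
  have : row k (P *m invmx P) = 0 by rewrite row_mul H0 mul0mx.
  rewrite mulmxV ?unitarymx_unit // => /rowP /(_ k); rewrite !mxE eqxx /= => /eqP.
  by rewrite oner_eq0.
have E1 : toC ((xr *m S *m xr^T) 0 0) = (y *m diag_mx X *m y ^t*) 0 0.
  by rewrite -HQ Hxc -!map_mxM [RHS]mxE.
have E2 : toC ((xr *m xr^T) 0 0) = (y *m y ^t*) 0 0.
  by rewrite -HN Hxc -!map_mxM [RHS]mxE.
have E3 : toC (s * (xr *m xr^T) 0 0) = toC s * (y *m y ^t*) 0 0.
  by rewrite -E2 rmorphM.
rewrite -lecR E1 E3 !mxE mulr_sumr; apply: ler_sum => k _.
rewrite mul_mx_diag !mxE mulrAC -normCK [toC s * _]mulrC.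
apply: ler_wpM2l; first by apply: exprn_ge0; apply: normr_ge0.
have Xr : X 0 k \is Num.real by apply: (mxOverP Xreal).
by rewrite -(RRe_real Xr) lecR; apply: Heig; apply: Heigk.
Qed.
End Quad.
Section Ray.
Variables (R : realType) (n : nat).
Local Notation toC := (real_complex R).

Lemma rayleigh (M : 'M[R]_n) (w phi : 'I_n -> R) :
  (forall i, 0 < w i) -> (forall i j, w i * M i j = w j * M j i) ->
  \sum_i w i * phi i * (\sum_j M i j * phi j)
    <= spectral_bound M * \sum_i w i * phi i ^+ 2.
Proof.
move=> wpos Hbal.
pose d i := Num.sqrt (w i).
have dpos : forall i, 0 < d i by move=> i; rewrite sqrtr_gt0.
have dne0 : forall i, d i != 0 by move=> i; rewrite gt_eqF.
have Hd2 : forall i, w i = d i ^+ 2 by move=> i; rewrite sqr_sqrtr // ltW.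
pose S := \matrix_(i, j) (d i * M i j / d j).
have Ssym : forall i j, S i j = S j i.
  move=> i j; rewrite !mxE.
  have H := Hbal i j; rewrite !Hd2 in H.
  have dij := dne0 i; have dji := dne0 j.
  transitivity (d i ^+ 2 * M i j / (d i * d j)); first by field; rewrite ?dij ?dji.
  by rewrite H; field; rewrite ?dij ?dji.
pose xr := \row_i (d i * phi i).
have L1 : (xr *m S *m xr^T) 0 0 = \sum_i w i * phi i * (\sum_j M i j * phi j).
  rewrite mxE; under eq_bigr do rewrite mxE mulr_suml.
  rewrite exchange_big; apply: eq_bigr => i _; rewrite mulr_sumr.
  apply: eq_bigr => j _; rewrite !mxE Hd2.

  have dij := dne0 i; have dji := dne0 j; by field; rewrite ?dij ?dji.
have L2 : (xr *m xr^T) 0 0 = \sum_i w i * phi i ^+ 2.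
  rewrite mxE; apply: eq_bigr => i _; rewrite !mxE Hd2; ring.
rewrite -L1 -L2; apply: quad_bound => // z Hz; apply: sb_ub.
move: Hz => /eigenvalueP [v Hv v0]; apply/eigenvalueP.
exists (\row_j (v 0 j * toC (d j))).
  apply/rowP => j; rewrite !mxE.
  move/rowP/(_ j): Hv; rewrite !mxE => Hv.
  rewrite mulrA -Hv mulr_suml; apply: eq_bigr => i _; rewrite !mxE -!mulrA; congr (_ * _).
  rewrite -!rmorphM; congr (toC _).
  have dij := dne0 i; have dji := dne0 j; by field; rewrite ?dij ?dji.
apply/negP => /eqP /rowP H0; apply/negP: v0; apply/negPn/eqP/rowP => j.
move: (H0 j); rewrite !mxE => /eqP; rewrite mulf_eq0 => /orP [/eqP //|].
by rewrite -(rmorph0 toC) (inj_eq (@complexI R)) (negbTE (dne0 j)).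
Qed.
End Ray.
Section Final.
Variables (R : realType) (n : nat) (A : 'M[R]_n).

Lemma Mbal (al : 'I_n -> R) (mu : R) (h : 'I_n -> R) :
  (forall i j, al i * A i j = al j * A j i) ->
  forall i j, al i * (mu *: connL A + diag_mx (\row_k h k)) i j
            = al j * (mu *: connL A + diag_mx (\row_k h k)) j i.
Proof.
move=> H i j; case: (eqVneq i j) => [->//|ij].
rewrite !mxE (negbTE ij) eq_sym (negbTE ij) !mulr0n !addr0.
by rewrite mulrCA H mulrCA.
Qed.

Lemma Mrow (mu : R) (h r w : 'I_n -> R) i :
  mu * (\sum_j connL A i j * w j) + w i * (r i - w i) = 0 ->
  \sum_j (mu *: connL A + diag_mx (\row_k h k)) i j * w j = w i * (w i - (r i - h i)).
Proof.
move=> E.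
have -> : \sum_j (mu *: connL A + diag_mx (\row_k h k)) i j * w j
   = mu * (\sum_j connL A i j * w j) + h i * w i.
  transitivity (\sum_j (mu * (connL A i j * w j) + (h i * w i) *+ (i == j))).
    apply: eq_bigr => j _; rewrite !mxE; case: (eqVneq i j) => [->|ij] /=.
      by rewrite !mulr1n; ring.
    by ring.
  rewrite big_split /= -mulr_sumr; congr (_ + _).
  rewrite (bigD1 i) //= eqxx mulr1n big1 ?addr0 // => j ji.
  by rewrite eq_sym (negbTE ji) mulr0n.
move: E; lra.
Qed.

Lemma sum_pos (F : 'I_n -> R) (i0 : 'I_n) : (forall i, 0 < F i) -> 0 < \sum_i F i.
Proof.
move=> H; rewrite (bigD1 i0) //=.
have : 0 <= \sum_(i | i != i0) F i by apply: sumr_ge0 => i _; apply: ltW.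
have := H i0; lra.
Qed.

Lemma sum_eq0 (F : 'I_n -> R) : (forall i, 0 <= F i) -> \sum_i F i = 0 -> forall i, F i = 0.
Proof.
move=> H /eqP; rewrite psumr_eq0 // => /allP Hall i.
by apply/eqP; apply: Hall; apply: mem_index_enum.
Qed.

End Final.
Lemma final_logic (R : realFieldType) (lu lv Su Sv c3 Mi : R) :
  0 < Su -> 0 < Sv -> 0 < c3 -> 0 <= Mi -> lu * Su + c3 * lv * Sv <= - Mi ->
  0 <= lv -> 0 <= lu -> [/\ lv = 0, lu = 0 & Mi = 0].
Proof.
move=> H1 H2 H3 H4 H5 H6 H7.
have a : 0 <= lu * Su by apply: mulr_ge0 => //; apply: ltW.
have b : 0 <= c3 * lv * Sv by apply: mulr_ge0; [apply: mulr_ge0 => //; apply: ltW|apply: ltW].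
have e1 : lu * Su = 0 by lra.
have e2 : c3 * lv * Sv = 0 by lra.
split; last by lra.
  by move/eqP: e2; rewrite !mulf_eq0 (gt_eqF H3) (gt_eqF H2) orbF /= => /eqP.
by move/eqP: e1; rewrite !mulf_eq0 (gt_eqF H1) orbF => /eqP.
Qed.

Lemma squeeze_aux (R : realFieldType) (L X Y Z : R) :
  L <= X -> X = Y - Z -> 0 <= Z -> L = Y -> Z = 0.
Proof. move=> *; lra. Qed.

Unset Implicit Arguments.

Theorem mainTheorem5 (R : realType) (n : nat) (A : 'M[R]_n)
    (b c mu_u mu_v : R) (p q ustar vstar : 'I_n -> R) :
  (2 <= n)%N ->
  (forall i j, i != j -> 0 <= A i j) ->
  (* (A1) *)
  0 < b -> 0 < c -> b * c <= 1 ->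
  (forall i, 0 < p i) -> (forall i, 0 < q i) ->
  (* (A2), (A3) *)
  irreducible_mx (connL A) ->
  cycle_balanced A ->
  0 < mu_u -> 0 < mu_v ->
  (* u* = w*(mu_u, p), v* = w*(mu_v, q) *)
  positive_equilibrium A mu_u p ustar ->
  positive_equilibrium A mu_v q vstar ->
  let lu := lambda1 A mu_u (fun i => p i - c * vstar i) in
  let lv := lambda1 A mu_v (fun i => q i - b * ustar i) in
  let LHS := lu * (\sum_i alpha A i * ustar i ^+ 2)
             + c ^+ 3 * lv * (\sum_i alpha A i * vstar i ^+ 2) in
  let MID := - \sum_i alpha A i * (c * vstar i - ustar i) ^+ 2
                                 * (c * vstar i + ustar i) in
  [/\ LHS <= MID, MID <= 0,
      (LHS = MID /\ MID = 0 -> (forall i, ustar i = c * vstar i) /\ b * c = 1)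
    & (0 <= lv /\ 0 <= lu ->
         [/\ lv = 0, lu = 0, b * c = 1 & forall i, ustar i = c * vstar i])].
Proof.
move=> n2 Apos b0 c0 bc1 p0 q0 Airr cb mu0 mv0 [upos ueq] [vpos veq].
have i0 : 'I_n by exists 0%N; apply: leq_trans n2.
set u := ustar; set v := vstar.
have alpos := alpha_pos Apos Airr.
have DB := detailed_balance Apos cb alpos (alpha_div Apos Airr).
set al := alpha A.
set Mu := mu_u *: connL A + diag_mx (\row_k (p k - c * v k)).
set Mv := mu_v *: connL A + diag_mx (\row_k (q k - b * u k)).
have Ru := rayleigh u (alpos) (Mbal mu_u (fun k => p k - c * v k) DB).
have Rv := rayleigh v (alpos) (Mbal mu_v (fun k => q k - b * u k) DB).
rewrite -/Mu -/Mv in Ru Rv.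
have Hu : forall i, \sum_j Mu i j * u j = u i * (u i - c * v i).
  move=> i; rewrite (@Mrow R n A mu_u (fun k => p k - c * v k) p u i (ueq i)); congr (_ * _); ring.
have Hv : forall i, \sum_j Mv i j * v j = v i * (v i - b * u i).
  move=> i; rewrite (@Mrow R n A mu_v (fun k => q k - b * u k) q v i (veq i)); congr (_ * _); ring.
have ERu : \sum_i alpha A i * u i * (\sum_j Mu i j * u j)
    = \sum_i alpha A i * u i * (u i * (u i - c * v i)) by apply: eq_bigr => i _; rewrite Hu.
have ERv : \sum_i alpha A i * v i * (\sum_j Mv i j * v j)
    = \sum_i alpha A i * v i * (v i * (v i - b * u i)) by apply: eq_bigr => i _; rewrite Hv.
rewrite ERu in Ru; rewrite ERv in Rv.
rewrite /lambda1 -/Mu -/Mv.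
set su := spectral_bound Mu; set sv := spectral_bound Mv.
set Su := \sum_i al i * u i ^+ 2; set Sv := \sum_i al i * v i ^+ 2.
set Tu := \sum_i al i * u i * (u i * (u i - c * v i)) in Ru.
set Tv := \sum_i al i * v i * (v i * (v i - b * u i)) in Rv.
set K := \sum_i al i * (c ^+ 2 * v i ^+ 2 * u i).
set Mi := \sum_i al i * (c * v i - u i) ^+ 2 * (c * v i + u i).
have HB : - Tu - c ^+ 3 * Tv = - Mi - (1 - b * c) * K.
  rewrite /Tu /Tv /Mi /K !mulr_sumr -!sumrN -!big_split; apply: eq_bigr => i _ /=; ring.
have Kpos : 0 < K.
  apply: (sum_pos i0) => i; apply: mulr_gt0 => //.
  by apply: mulr_gt0; [apply: mulr_gt0; apply: exprn_gt0|].
have Mi0 : 0 <= Mi.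
  apply: sumr_ge0 => i _; apply: mulr_ge0; last by apply: addr_ge0; [apply: mulr_ge0|]; apply: ltW.
  by apply: mulr_ge0; [apply: ltW | apply: sqr_ge0].
have Supos : 0 < Su by apply: (sum_pos i0) => i; apply: mulr_gt0 => //; apply: exprn_gt0.
have Svpos : 0 < Sv by apply: (sum_pos i0) => i; apply: mulr_gt0 => //; apply: exprn_gt0.
have c3 : 0 < c ^+ 3 by apply: exprn_gt0.
have Hlu : - su * Su <= - Tu by rewrite mulNr lerN2.
have Hlv : c ^+ 3 * (- sv) * Sv <= - c ^+ 3 * Tv.
  rewrite mulrN mulNr mulNr lerN2 -mulrA; apply: ler_wpM2l => //; exact: ltW.
have bc0 : 0 <= 1 - b * c by rewrite subr_ge0.
have HK : 0 <= (1 - b * c) * K by apply: mulr_ge0 => //; apply: ltW.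
have Lle : - su * Su + c ^+ 3 * - sv * Sv <= - Mi.
  apply: le_trans (lerD Hlu Hlv) _.
  have -> : - Tu + - c ^+ 3 * Tv = - Mi - (1 - b * c) * K by rewrite -HB mulNr.
  by rewrite lerBlDr lerDl.
have Hchain : - su * Su + c ^+ 3 * - sv * Sv <= - Mi - (1 - b * c) * K.
  by apply: le_trans (lerD Hlu Hlv) _; rewrite -HB mulNr.
have Heq : - su * Su + c ^+ 3 * - sv * Sv = - Mi -> - Mi = 0 ->
    (forall i, u i = c * v i) /\ b * c = 1.
  move=> E1 E2; split.
    move=> i.
    have Mi00 : Mi = 0 by rewrite -[Mi]opprK E2 oppr0.
    have Hnn : forall j, 0 <= al j * (c * v j - u j) ^+ 2 * (c * v j + u j).
      move=> j; apply: mulr_ge0; last by apply: addr_ge0; [apply: mulr_ge0|]; apply: ltW.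
      by apply: mulr_ge0; [apply: ltW | apply: sqr_ge0].
    have Z := @sum_eq0 R n (fun i => al i * (c * v i - u i) ^+ 2 * (c * v i + u i)) Hnn Mi00 i.
    case: (eqVneq (c * v i - u i) 0) => [/eqP|ne]; first by rewrite subr_eq0 => /eqP ->.
    have : 0 < al i * (c * v i - u i) ^+ 2 * (c * v i + u i).
      apply: mulr_gt0; last by apply: addr_gt0 => //; apply: mulr_gt0.
      by apply: mulr_gt0; [apply: alpos | rewrite lt_def sqrf_eq0 ne sqr_ge0].
    by rewrite /= in Z; rewrite Z ltxx.
  have Z := squeeze_aux Hchain (erefl _) HK E1.
  move/eqP: Z; rewrite mulf_eq0 (gt_eqF Kpos) orbF subr_eq0 => /eqP <-. by [].
clearbody su sv Mi Su Sv.
split.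
- exact: Lle.
- by rewrite oppr_le0.
- by case=> E1 E2; apply: Heq.
- case=> H1 H2.
  have [F1 F2 F3] := final_logic Supos Svpos c3 Mi0 Lle H1 H2.
  have E1 : - su * Su + c ^+ 3 * - sv * Sv = - Mi.
    by rewrite F1 F2 F3 !(mul0r, mulr0, oppr0, addr0).
  have E2 : - Mi = 0 by rewrite F3 oppr0.
  have [G1 G2] := Heq E1 E2.
  by split.
Qed.
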